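(* If $\sum_{i=1}^M b_i\ge1$, then for every $\epsilon>0$, $$\bar\Delta_{\mathrm{opt}}(\epsilon)\le\bar\Delta(\mathbf r^\star)\le\sum_{i=1}^M\Big[\frac{w_i\,e^{x^\star\epsilon}\big(1+\frac1{x^\star}\big)}{\min\{b_i,\beta^\star\sqrt{w_i}\}}+w_i\Big],$$ where $\mathbf r^\star$, $x^\star$, $\beta^\star$ are as in the energy-adequate solution.
   Context: Fix an integer $M\ge1$, weights $w_1,\dots,w_M>0$, constants $b_1,\dots,b_M>0$, and $\epsilon>0$. For $\mathbf r\in(0,\infty)^M$ write $S(\mathbf r)=\sum_{i=1}^M r_i$ and define $$\bar\Delta(\mathbf r)=\sum_{l=1}^M \frac{w_l e^{-r_l\epsilon}}{r_l}\, e^{\epsilon S(\mathbf r)}\big(1+S(\mathbf r)\big)+\sum_{l=1}^M w_l,\qquad \sigma_l(\mathbf r)=\frac{(1-e^{-r_l\epsilon})S(\mathbf r)+r_le^{-r_l\epsilon}}{S(\mathbf r)+1}.$$ Problem 1: minimize $\bar\Delta(\mathbf r)$ over $\mathbf r\in(0,\infty)^M$ subject to $\sigma_l(\mathbf r)\le b_l$ for all $l$; its optimal (infimum) value is $\bar\Delta_{\mathrm{opt}}(\epsilon)$. Energy-adequate solution (when $\sum_i b_i\ge1$): let $\beta^\star\in[0,\max_l b_l/\sqrt{w_l}]$ be the root of $\sum_{i=1}^M\min\{b_i,\beta^\star\sqrt{w_i}\}=1$, let $x^\star=-\tfrac12+\sqrt{\tfrac14+\tfrac1\epsilon}$, and set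 $r^\star_l=\min\{b_l,\beta^\star\sqrt{w_l}\}\,x^\star$. *)

(* Defs.v *)
(* classical reals. Indices l = 0..M-1 (paper: 1..M). *)
From Stdlib Require Import Reals Lra.
Open Scope R_scope.

Fixpoint sumR (M : nat) (f : nat -> R) : R :=
  match M with
  | O => 0
  | S k => sumR k f + f k
  end.

(* maxR M f = max(0, f 0, ..., f (M-1)); for positive values (M >= 1) this is max_l f l *)
Fixpoint maxR (M : nat) (f : nat -> R) : R :=
  match M with
  | O => 0
  | S k => Rmax (maxR k f) (f k)
  end.

Definition Ssum (M : nat) (r : nat -> R) : R := sumR M r.

Definition Delta_bar (M : nat) (w : nat -> R) (eps : R) (r : nat -> R) : R :=
  sumR M (fun l => w l * exp (- r l * eps) / r l * exp (eps * Ssum M r) * (1 + Ssum M r))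
  + sumR M w.

Definition sigma (M : nat) (eps : R) (r : nat -> R) (l : nat) : R :=
  ((1 - exp (- r l * eps)) * Ssum M r + r l * exp (- r l * eps)) / (Ssum M r + 1).

Definition feasible (M : nat) (b : nat -> R) (eps : R) (r : nat -> R) : Prop :=
  (forall i, (i < M)%nat -> 0 < r i) /\
  (forall l, (l < M)%nat -> sigma M eps r l <= b l).

Definition feasible_values (M : nat) (w b : nat -> R) (eps : R) (v : R) : Prop :=
  exists r, feasible M b eps r /\ v = Delta_bar M w eps r.

Definition is_glb (E : R -> Prop) (m : R) : Prop :=
  (forall v, E v -> m <= v) /\ (forall m', (forall v, E v -> m' <= v) -> m' <= m).

Definition x_star (eps : R) : R := - (1/2) + sqrt (1/4 + 1/eps).

(* Main.v *)
Require Import Defs.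
From Stdlib Require Import Reals Lra Lia.
Open Scope R_scope.

Lemma sumR_le M f g : (forall i, (i < M)%nat -> f i <= g i) -> sumR M f <= sumR M g.
Proof.
  induction M; simpl; intros H; [lra|].
  assert (f M <= g M) by (apply H; auto).
  assert (sumR M f <= sumR M g) by (apply IHM; intros; apply H; auto). lra.
Qed.

Lemma sumR_pos M f : (1 <= M)%nat -> (forall i, (i < M)%nat -> 0 < f i) -> 0 < sumR M f.
Proof.
  induction M; simpl; intros HM H; [lia|].
  destruct M.
  - simpl. assert (0 < f 0%nat) by (apply H; auto). lra.
  - assert (0 < f (S M)) by (apply H; auto).
    assert (0 < sumR (S M) f) by (apply IHM; [lia| intros; apply H; auto]). lra.
Qed.

Lemma sumR_scal M f x : sumR M (fun i => f i * x) = sumR M f * x.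
Proof. induction M; simpl; [ring| rewrite IHM; ring]. Qed.

Lemma sumR_ext M f g : (forall i, (i < M)%nat -> f i = g i) -> sumR M f = sumR M g.
Proof.
  induction M; simpl; intros H; auto.
  rewrite IHM by (intros; apply H; auto). rewrite H; auto.
Qed.

Lemma x_star_pos eps : 0 < eps -> 0 < x_star eps.
Proof.
  intros He. unfold x_star.
  assert (1/2 < sqrt (1/4 + 1/eps)).
  { assert (0 < 1/eps) by (apply Rdiv_lt_0_compat; lra).
    rewrite <- (sqrt_square (1/2)) by lra. apply sqrt_lt_1_alt; nra. }
  lra.
Qed.

Lemma x_star_eq eps : 0 < eps -> x_star eps * x_star eps + x_star eps = 1/eps.
Proof.
  intros He. unfold x_star.
  assert (0 < 1/eps) by (apply Rdiv_lt_0_compat; lra).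
  assert (Hs := sqrt_sqrt (1/4 + 1/eps) ltac:(lra)).
  nra.
Qed.

Theorem lemma2 (M : nat) (w b : nat -> R) (eps beta : R) :
  (1 <= M)%nat ->
  (forall i, (i < M)%nat -> 0 < w i) ->
  (forall i, (i < M)%nat -> 0 < b i) ->
  0 < eps ->
  1 <= sumR M b ->
  0 <= beta ->
  beta <= maxR M (fun l => b l / sqrt (w l)) ->
  sumR M (fun i => Rmin (b i) (beta * sqrt (w i))) = 1 ->
  let rstar := fun l => Rmin (b l) (beta * sqrt (w l)) * x_star eps in
  exists Dopt,
    is_glb (feasible_values M w b eps) Dopt /\
    Dopt <= Delta_bar M w eps rstar /\
    Delta_bar M w eps rstar <=
      sumR M (fun i => w i * exp (x_star eps * eps) * (1 + 1 / x_star eps)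
                       / Rmin (b i) (beta * sqrt (w i)) + w i).
Proof.
  intros HM Hw Hb He Hsb Hbeta _ Hsum rstar.
  set (x := x_star eps).
  set (c := fun i => Rmin (b i) (beta * sqrt (w i))).
  assert (Hx : 0 < x) by (apply x_star_pos; auto).
  assert (Hxe : x * x + x = 1/eps) by (apply x_star_eq; auto).
  assert (Hbp : 0 < beta).
  { destruct Hbeta as [?|Hb0]; auto. subst beta. exfalso.
    assert (sumR M (fun i => Rmin (b i) (0 * sqrt (w i))) = sumR M (fun _ => 0)).
    { apply sumR_ext. intros i Hi. rewrite Rmult_0_l. apply Rmin_right.
      specialize (Hb i Hi); lra. }
    assert (forall n, sumR n (fun _ => 0) = 0) by (induction n; simpl; auto; lra).
    rewrite H0 in H. lra. }
  assert (Hc : forall i, (i < M)%nat -> 0 < c i).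
  { intros i Hi. unfold c. apply Rmin_glb_lt; auto.
    apply Rmult_lt_0_compat; auto. apply sqrt_lt_R0; auto. }
  assert (Hcb : forall i, (i < M)%nat -> c i <= b i) by (intros; apply Rmin_l).
  assert (HS : Ssum M rstar = x).
  { unfold Ssum, rstar. rewrite sumR_scal. fold x. rewrite Hsum. ring. }
  assert (Hfeas : feasible M b eps rstar).
  { split.
    - intros i Hi. unfold rstar. apply Rmult_lt_0_compat; auto. apply Hc; auto.
    - intros l Hl. unfold Defs.sigma. rewrite HS. unfold rstar. fold x.
      fold (c l). specialize (Hc l Hl). specialize (Hcb l Hl).
      set (a := c l * x * eps).
      assert (Ha : 1 - exp (- (c l * x) * eps) <= a).
      { assert (H1 := exp_ineq1_le (- (c l * x) * eps)). unfold a. lra. }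
      assert (He1 : exp (- (c l * x) * eps) <= 1).
      { rewrite <- exp_0. apply Rlt_le, exp_increasing. assert (0 < c l * x) by (apply Rmult_lt_0_compat; lra). nra. } 
      assert (Hep : 0 < exp (- (c l * x) * eps)) by apply exp_pos.
      apply Rle_trans with (c l).
      + apply Rmult_le_reg_r with (x + 1); [lra|].
        unfold Rdiv. rewrite Rmult_assoc, Rinv_l, Rmult_1_r by lra.
        assert (Hx2 : x * x * eps + x * eps = 1).
        { rewrite <- Rmult_plus_distr_r, Hxe. field. lra. }
        assert ((1 - exp (- (c l * x) * eps)) * x <= a * x) by (apply Rmult_le_compat_r; lra).
        assert (c l * x * exp (- (c l * x) * eps) <= c l * x * 1) by (apply Rmult_le_compat_l; [apply Rlt_le, Rmult_lt_0_compat|]; lra).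
        assert (0 <= c l * x * eps) by (apply Rlt_le; repeat apply Rmult_lt_0_compat; lra).
        assert (Hq : a * x = c l * (x * x * eps)) by (unfold a; ring).
        assert (c l * (x * x * eps + x * eps) = c l) by (rewrite Hx2; ring).
        unfold a in *. nra.
      + auto. }
  assert (Hnn : forall r, feasible M b eps r -> 0 <= Delta_bar M w eps r).
  { intros r [Hr _]. unfold Delta_bar.
    assert (0 < Ssum M r) by (apply sumR_pos; auto).
    assert (0 < sumR M w) by (apply sumR_pos; auto).
    assert (0 <= sumR M (fun l => w l * exp (- r l * eps) / r l * exp (eps * Ssum M r) * (1 + Ssum M r))).
    { apply Rle_trans with (sumR M (fun _ => 0)).
      { clear. induction M; simpl; lra. }
      apply sumR_le. intros i Hi.
      specialize (Hr i Hi). specialize (Hw i Hi).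
      assert (0 < exp (- r i * eps)) by apply exp_pos.
      assert (0 < exp (eps * Ssum M r)) by apply exp_pos.
      assert (0 < / r i) by (apply Rinv_0_lt_compat; auto).
      unfold Rdiv. apply Rlt_le.
      repeat apply Rmult_lt_0_compat; lra. }
    lra. }
  set (L := fun m => forall v, feasible_values M w b eps v -> m <= v).
  destruct (completeness L) as [m [Hub Hlub]].
  { exists (Delta_bar M w eps rstar). intros m Hm. apply Hm. exists rstar; auto. }
  { exists 0. intros v [r [Hr ->]]. apply Hnn; auto. }
  exists m. split; [split|split].
  - intros v Hv. apply Hlub. intros m' Hm'. apply Hm'; auto.
  - intros m' Hm'. apply Hub. exact Hm'.
  - apply Hlub. intros m' Hm'. apply Hm'. exists rstar; auto.
  - unfold Delta_bar. rewrite HS.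
    rewrite <- (Rplus_0_r (sumR M (fun i => _ + w i))).
    assert (forall f g, sumR M (fun i => f i + g i) = sumR M f + sumR M g) as Hadd.
    { clear. intros f g. induction M; simpl; [lra| rewrite IHM; lra]. }
    rewrite Rplus_0_r, Hadd. apply Rplus_le_compat_r.
    apply sumR_le. intros i Hi.
    specialize (Hc i Hi). specialize (Hw i Hi). fold (c i).
    unfold rstar. fold x. fold (c i).
    assert (He1 : exp (- (c i * x) * eps) <= 1).
    { rewrite <- exp_0. apply Rlt_le, exp_increasing. assert (0 < c i * x) by (apply Rmult_lt_0_compat; lra). nra. }
    assert (Hep : 0 < exp (- (c i * x) * eps)) by apply exp_pos.
    assert (0 < exp (x * eps)) by apply exp_pos.
    rewrite (Rmult_comm eps x).
    replace (w i * exp (- (c i * x) * eps) / (c i * x) * exp (x * eps) * (1 + x))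
      with (exp (- (c i * x) * eps) * (w i * exp (x * eps) * (1 + 1 / x) / c i))
      by (field; lra).
    assert (0 < w i * exp (x * eps) * (1 + 1 / x) / c i).
    { apply Rdiv_lt_0_compat; auto. repeat apply Rmult_lt_0_compat; auto.
      assert (0 < 1/x) by (apply Rdiv_lt_0_compat; lra). lra. }
    nra.
Qed.
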